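(* Let $a,b,c$ be pairwise coprime positive integers and let $G$ be an $(a,b,c)$-group with $(a,b,c)$-generators $x,y$, i.e. $G$ is a finite group generated by $x,y$ with $\operatorname{ord}(x)=a$, $\operatorname{ord}(y)=b$ and $\operatorname{ord}(xy)=c$. Then the Veech group of the regular origami $(G,y,x)$ is a totally non-congruence group.
   Context: A regular origami $(G,u,v)$ is given by a finite group $G$ generated by two elements $u,v$: it is the translation surface obtained from unit squares indexed by the elements $g\in G$, where the right edge of square $g$ is glued to the left edge of square $gu$ and the top edge of square $g$ is glued to the bottom edge of square $gv$. Two regular origamis $(G,u,v)$, $(G',u',v')$ are identified if there is a group isomorphism $G\to G'$ with $u\mapsto u'$, $v\mapsto v'$. The group $\mathrm{SL}(2,\mathbb{Z})$ acts on regular origamis via $S\cdot(G,u,v)=(G,v^{-1},u)$ and $T\cdot(G,u,v)=(G,u,vu^{-1})$, where $S=\begin{pmatrix}0&-1\\1&0\end{pmatrix}$, $T=\begin{pmatrix}1&1\\0&1\end{pmatrix}$. The Veech group of a regular origami is its stabilizer under this action, a finite index subgroup of $\mathrm{SL}(2,\mathbb{Z})$. A finite index subgroup $\Gamma\le\mathrm{SL}(2,\mathbb{Z})$ is a totally non-congruence group if for every integer $n\ge1$ the reduction map $\mathrm{SL}(2,\mathbb{Z})\to\mathrm{SL}(2,\mathbb{Z}/n\mathbb{Z})$ restricted to $\Gamma$ is surjective. *)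

(* Defs.v *)
From HB Require Import structures.
From mathcomp Require Import all_boot all_order all_algebra all_fingroup.
Set Implicit Arguments. Unset Strict Implicit. Unset Printing Implicit Defensive.
Import GRing.Theory.
Local Open Scope ring_scope.

Definition Smx : 'M[int]_2 :=
  \matrix_(i < 2, j < 2)
    (if (i == 0 :> nat) then (if (j == 0 :> nat) then 0 else -1)
     else (if (j == 0 :> nat) then 1 else 0)).
Definition Tmx : 'M[int]_2 :=
  \matrix_(i < 2, j < 2)
    (if (i == 0 :> nat) then 1 else (if (j == 0 :> nat) then 0 else 1)).

(* A word in S (true) and T (false); it represents the product of the letters
   in order.  Since S^4 = 1 and T^-1 = S T S T S^3, every element of SL(2,Z)
   is represented by such a word. *)
Definition mat_word (w : seq bool) : 'M[int]_2 :=
  foldr (fun b M => (if b then Smx else Tmx) *m M) 1%:M w.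

Local Open Scope group_scope.

(* Action on generating pairs (u,v) of a regular origami (G,u,v):
   S.(G,u,v) = (G, v^-1, u),  T.(G,u,v) = (G, u, v u^-1). *)
Definition act_S (gT : finGroupType) (p : gT * gT) : gT * gT := (p.2^-1, p.1).
Definition act_T (gT : finGroupType) (p : gT * gT) : gT * gT := (p.1, p.2 * p.1^-1).

Definition act_word (gT : finGroupType) (w : seq bool) (p : gT * gT) : gT * gT :=
  foldr (fun b q => if b then act_S q else act_T q) p w.

Definition origami_iso (gT : finGroupType) (G : {group gT}) (p q : gT * gT) : Prop :=
  exists f : {morphism G >-> gT}, [/\ isom G G f, f p.1 = q.1 & f p.2 = q.2].

Definition in_veech (gT : finGroupType) (G : {group gT}) (u v : gT)
    (A : 'M[int]_2) : Prop :=
  exists w : seq bool, mat_word w = A /\ origami_iso G (act_word w (u, v)) (u, v).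

Local Close Scope group_scope.

(* Gamma (a subset of SL(2,Z)) is totally non-congruence: for every n >= 1 the
   reduction SL(2,Z) -> SL(2,Z/nZ) restricted to Gamma is surjective, i.e. every
   integer matrix B with det B = 1 mod n is congruent mod n to some A in Gamma. *)
Definition totally_noncongruence (Gamma : 'M[int]_2 -> Prop) : Prop :=
  forall n : nat, (0 < n)%N ->
  forall B : 'M[int]_2, (\det B = 1 %[mod n%:Z])%Z ->
  exists A : 'M[int]_2, Gamma A /\ forall i j, (A i j = B i j %[mod n%:Z])%Z.

(* Main.v *)
From HB Require Import structures.
From mathcomp Require Import all_boot all_order all_algebra all_fingroup.
From mathcomp Require Import ring zify.
Require Import Defs.
Set Implicit Arguments. Unset Strict Implicit. Unset Printing Implicit Defensive.
Import GRing.Theory.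
Local Open Scope ring_scope.
Section M2.
Variable R : comNzRingType.

Definition mk2 (a b c d : R) : 'M[R]_2 :=
  \matrix_(i < 2, j < 2)
    (if (i == 0 :> nat) then (if (j == 0 :> nat) then a else b)
     else (if (j == 0 :> nat) then c else d)).

Lemma mx2E (M : 'M[R]_2) : M = mk2 (M 0 0) (M 0 1) (M 1 0) (M 1 1).
Proof.
apply/matrixP => i j; rewrite !mxE.
by case: i => [[|[|//]] ?]; case: j => [[|[|//]] ?] /=; congr (M _ _); apply: val_inj.
Qed.

Lemma mk2M a b c d a' b' c' d' :
  mk2 a b c d *m mk2 a' b' c' d' =
  mk2 (a * a' + b * c') (a * b' + b * d') (c * a' + d * c') (c * b' + d * d').
Proof.
apply/matrixP => i j; rewrite !mxE !big_ord_recl big_ord0 addr0 !mxE /=.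
by case: i => [[|[|//]] ?]; case: j => [[|[|//]] ?].
Qed.

Lemma mk2_1 : (1%:M : 'M[R]_2) = mk2 1 0 0 1.
Proof.
apply/matrixP => i j; rewrite !mxE.
by case: i => [[|[|//]] ?]; case: j => [[|[|//]] ?].
Qed.

Lemma det2 a b c d : \det (mk2 a b c d) = a * d - b * c.
Proof.
rewrite (expand_det_row _ 0) !big_ord_recl big_ord0 addr0 /cofactor !det_mx11 !mxE /=.
rewrite expr0 expr1 mul1r; ring.
Qed.

End M2.

Lemma mat_word_cat w1 w2 : mat_word (w1 ++ w2) = mat_word w1 *m mat_word w2.
Proof.
elim: w1 => [|b w IH] /=; first by rewrite mul1mx.
by rewrite IH mulmxA.
Qed.
Lemma act_word_cat (gT : finGroupType) w1 w2 (p : gT * gT) :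
  act_word (w1 ++ w2) p = act_word w1 (act_word w2 p).
Proof. by rewrite /act_word foldr_cat. Qed.
Lemma act_Tpow (gT : finGroupType) k (u v : gT) :
  act_word (nseq k false) (u, v) = (u, (v * (u^-1) ^+ k)%g).
Proof.
elim: k => [|k IH] /=; first by rewrite expg0 mulg1.
rewrite -/(act_word _ _) IH /act_T /=. by rewrite expgSr mulgA.
Qed.

Definition Um (R : comNzRingType) (t : R) := mk2 1 t 0 1.
Definition Lm (R : comNzRingType) (t : R) := mk2 1 0 t 1.
Definition Wm (R : comNzRingType) (t : R) := Um 1 *m Lm t *m Um (-1).

Lemma UmD (R : comNzRingType) (s t : R) : Um s *m Um t = Um (s + t).
Proof. by rewrite /Um mk2M; congr mk2; ring. Qed.
Lemma LmD (R : comNzRingType) (s t : R) : Lm s *m Lm t = Lm (s + t).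
Proof. by rewrite /Lm mk2M; congr mk2; ring. Qed.
Lemma Um0 (R : comNzRingType) : Um (0 : R) = 1%:M.
Proof. by rewrite mk2_1. Qed.
Lemma Lm0 (R : comNzRingType) : Lm (0 : R) = 1%:M.
Proof. by rewrite mk2_1. Qed.
Lemma WmD (R : comNzRingType) (s t : R) : Wm s *m Wm t = Wm (s + t).
Proof.
rewrite /Wm -!mulmxA (mulmxA (Um (-1))) UmD addNr Um0 mul1mx.
by rewrite (mulmxA (Lm s)) LmD.
Qed.

Lemma UmE_idem (R : comNzRingType) (e : R) : e * e = e -> Lm (-e) *m Wm (-e) *m Lm e = Um e.
Proof.
move=> He; rewrite /Wm /Um /Lm !mk2M; congr mk2.
- by transitivity (1 + (e * e - e) * 1); [ring | rewrite He subrr mul0r addr0].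
- by ring.
- by transitivity (0 + (e * e - e) * (1 - e)); [ring | rewrite He subrr mul0r addr0].
- by transitivity (1 + (e * e - e) * (-1)); [ring | rewrite He subrr mul0r addr0].
Qed.

Lemma bezout_split (R : comNzRingType) (A C U V t : R) :
  U * A + V * C = 1 -> t = A * (U * t) + C * (V * t).
Proof. by move=> h; rewrite -{1}[t]mul1r -h; ring. Qed.

Lemma mulLm (R : comNzRingType) (p q r s t : R) :
  mk2 p q r s *m Lm t = mk2 (p + q * t) q (r + s * t) s.
Proof. by rewrite /Lm mk2M; congr mk2; ring. Qed.
Lemma mulUm (R : comNzRingType) (p q r s t : R) :
  mk2 p q r s *m Um t = mk2 p (p * t + q) r (r * t + s).
Proof. by rewrite /Um mk2M; congr mk2; ring. Qed.
Lemma natmod (R : comNzRingType) (P Q : nat) :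
  (P%:R - Q%:R * (P %/ Q)%:R : R) = (P %% Q)%:R.
Proof. by rewrite {1}(divn_eq P Q) natrD natrM; ring. Qed.

Lemma diag_decomp (R : comNzRingType) (p r s : R) : p * s = 1 ->
  mk2 p 0 r s = Lm (r * s) *m Um p *m Lm (- s) *m Um p *m Um (-1) *m Lm 1 *m Um (-1).
Proof.
move=> h; rewrite /Um /Lm !mk2M; congr mk2; symmetry.
- by transitivity (p + (p * s - 1) * (- p)); [ring | rewrite h subrr mul0r addr0].
- by transitivity (0 + (p * s - 1) * 1); [ring | rewrite h subrr mul0r addr0].
- by transitivity (r + (p * s - 1) * (- r * (p * s - 1) - 1)); [ring | rewrite h subrr mul0r addr0].
- by transitivity (s + (p * s - 1) * (r * s)); [ring | rewrite h subrr mul0r addr0].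
Qed.

Section Zn.
Variable m : nat.
Local Notation N := m.+2.
Local Notation Z := 'Z_N.

Lemma ZN0 : (N%:R : Z) = 0.
Proof. by rewrite pchar_Zp. Qed.

Lemma intr_mod (z : int) : (z%:~R : Z) = ((z %% N)%Z)%:~R.
Proof.
rewrite {1}(divz_eq z N) rmorphD rmorphM /= -[N%:~R]/(N%:R : Z) ZN0 mulr0 add0r.
by [].
Qed.

Lemma intr_eqmod (z z' : int) : ((z%:~R : Z) = z'%:~R) <-> (z = z' %[mod N])%Z.
Proof.
split; last by move=> h; rewrite intr_mod h -intr_mod.
rewrite intr_mod (intr_mod z').
have h0 : (N%:Z != 0) by [].
have := modz_ge0 z h0; have := ltz_mod z h0.
have := modz_ge0 z' h0; have := ltz_mod z' h0.
case: (z %% N)%Z => // k; case: (z' %% N)%Z => // k' /= hk' _ hk _.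
move=> h; move: (congr1 val h); rewrite /= !val_Zp_nat // !modn_small //.
by move=> ->.
Qed.
End Zn.

Lemma intr_addN (m : nat) (Y k : int) : ((Y + k * m.+2%:Z)%:~R : 'Z_m.+2) = Y%:~R.
Proof.
rewrite rmorphD rmorphM /= -[(m.+2)%:~R]/((m.+2)%:R : 'Z_m.+2) ZN0 mulr0 addr0 //.
Qed.

Section Main.
Variables (gT : finGroupType) (x y : gT) (a b c : nat).
Hypotheses (ha : (0 < a)%N) (hb : (0 < b)%N) (hc : (0 < c)%N).
Hypotheses (hab : coprime a b) (hbc : coprime b c) (hac : coprime a c).
Hypotheses (ox : #[x]%g = a) (oy : #[y]%g = b) (oxy : #[(x * y)%g]%g = c).
Variable m : nat.
Local Notation N := m.+2.
Local Notation Z := 'Z_N.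

Definition phi (A : 'M[int]_2) : 'M[Z]_2 := map_mx (fun z : int => (z%:~R : Z)) A.

Definition Reach (M : 'M[Z]_2) :=
  exists w, act_word w (y, x) = (y, x) /\ phi (mat_word w) = M.

Lemma Reach1 : Reach 1%:M.
Proof. by exists [::]; split => //; rewrite /phi /= map_mx1. Qed.

Lemma ReachM A B : Reach A -> Reach B -> Reach (A *m B).
Proof.
move=> [w1 [h1 p1]] [w2 [h2 p2]]; exists (w1 ++ w2); split.
  by rewrite act_word_cat h2 h1.
by rewrite mat_word_cat /phi map_mxM -p1 -p2.
Qed.

Lemma phiM A B : phi (A *m B) = phi A *m phi B.
Proof. by rewrite /phi map_mxM. Qed.

Lemma phiT : phi Tmx = Um 1.
Proof.
apply/matrixP => i j; rewrite !mxE.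
by case: i => [[|[|//]] ?]; case: j => [[|[|//]] ?].
Qed.

Lemma phiS : phi Smx = mk2 0 (-1) 1 0.
Proof.
apply/matrixP => i j; rewrite !mxE.
by case: i => [[|[|//]] ?]; case: j => [[|[|//]] ?] //=; rewrite rmorphN.
Qed.

Lemma phi_Tpow k : phi (mat_word (nseq k false)) = Um (k%:R).
Proof.
elim: k => [|k IH]; first by rewrite /phi /= map_mx1 Um0.
rewrite /= /phi map_mxM -/(phi _) -/(phi _) phiT IH UmD.
by rewrite mulrS.
Qed.

Lemma Reach_pow (F : Z -> 'M[Z]_2) :
  (forall s t, F s *m F t = F (s + t)) -> F 0 = 1%:M ->
  forall s0, Reach (F s0) -> forall t, Reach (F (s0 * t)).
Proof.
move=> FD F0 s0 h t.
have -> : s0 * t = s0 *+ (val t) by rewrite -mulr_natr natr_Zp.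
elim: (val t) => [|k IH]; first by rewrite mulr0n F0; exact: Reach1.
by rewrite mulrS -FD; apply: ReachM.
Qed.

Definition wL k := [:: true; true; true] ++ nseq k false ++ [:: true].

Lemma act_wL k (u v : gT) : act_word (wL k) (u, v) = ((u * v ^+ k)%g, v).
Proof.
rewrite /wL !act_word_cat /= -/(act_word _ _) act_Tpow /act_S /= !invgK.
by [].
Qed.

Lemma phi_wL k : phi (mat_word (wL k)) = Lm (- k%:R).
Proof.
rewrite !mat_word_cat /phi !map_mxM -!/(phi _) phi_Tpow.
have p1 : phi 1%:M = 1%:M by rewrite /phi map_mx1.
rewrite /= p1 phiS !mulmx1 /Um /Lm !mk2M.
by congr mk2; ring.
Qed.

Lemma ReachU t : Reach (Um (b%:R * t)).
Proof.
apply: Reach_pow; [exact: UmD | exact: Um0 |].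
exists (nseq b false); split; last exact: phi_Tpow.
by rewrite act_Tpow expgVn -oy expg_order invg1 mulg1.
Qed.

Lemma ReachL t : Reach (Lm (a%:R * t)).
Proof.
have -> : a%:R * t = - a%:R * (- t) by rewrite mulrNN.
apply: Reach_pow; [exact: LmD | exact: Lm0 |].
exists (wL a); split; last exact: phi_wL.
by rewrite act_wL -ox expg_order mulg1.
Qed.

Lemma Wm0 : Wm (0 : Z) = 1%:M.
Proof. by rewrite /Wm Lm0 mulmx1 UmD subrr Um0. Qed.

Lemma ReachW t : Reach (Wm (c%:R * t)).
Proof.
have -> : c%:R * t = - c%:R * (- t) by rewrite mulrNN.
apply: Reach_pow; [exact: WmD | exact: Wm0 |].
have h1 : Reach (Um 1 *m Lm (- c%:R) *m Um ((b.-1)%:R)).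
  exists (false :: wL c ++ nseq b.-1 false); split.
    change (act_T (act_word (wL c ++ nseq b.-1 false) (y,x)) = (y,x)).
    rewrite (act_word_cat (wL c)) act_Tpow.
    have -> : ((y^-1) ^+ b.-1 = y)%g.
      apply: (mulIg (y^-1)%g); rewrite -expgSr prednK // expgVn -oy expg_order.
      by rewrite invg1 mulgV.
    by rewrite act_wL -oxy expg_order mulg1 /act_T /= mulgK.
  change (phi (Tmx *m mat_word (wL c ++ nseq b.-1 false)) = Um 1 *m Lm (- c%:R) *m Um b.-1%:R).
  by rewrite (mat_word_cat (wL c)) phiM phiM phi_wL phi_Tpow phiT mulmxA.
have e : Um 1 *m Lm (- c%:R) *m Um (b.-1)%:R *m Um (b%:R * -1) = Wm (- c%:R :Z).
  rewrite -(mulmxA _ (Um _)) UmD /Wm; congr (_ *m Um _).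
  rewrite -subn1 natrB //; ring.
by rewrite -e; apply: ReachM h1 (ReachU (-1)).
Qed.


Lemma ReachU1 : Reach (Um 1).
Proof.
pose q := partn m.+2 \pi(b); pose mm := partn m.+2 (\pi(b)^').
have hN : (q * mm = N)%N by rewrite partnC.
have hNz : (q%:Z * mm%:Z = N%:Z) by rewrite -PoszM hN.
have cqm : coprimez q mm by rewrite coprimezE /= coprime_partC.
have hpa : (\pi(b)^').-nat a by rewrite -coprime_pi' // coprime_sym.
have hpc : (\pi(b)^').-nat c by rewrite -coprime_pi'.
have caq : coprimez a q by rewrite coprimezE /= coprime_sym (pnat_coprime (part_pnat _ _) hpa).
have ccq : coprimez c q by rewrite coprimezE /= coprime_sym (pnat_coprime (part_pnat _ _) hpc).
have cbm : coprimez b mm by rewrite coprimezE /= (pnat_coprime (pnat_pi hb) (part_pnat _ _)).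
have /coprimezP [[u v] /= huv] := cqm.
have /coprimezP [[u1 v1] /= h1] := caq.
have /coprimezP [[u2 v2] /= h2] := ccq.
have /coprimezP [[u3 v3] /= h3] := cbm.
pose e : Z := (v * mm)%:~R.
have ee : e * e = e.
  rewrite /e -rmorphM.
  have -> : v * mm * (v * mm) = v * mm + (- (u * v)) * N%:Z.
    rewrite -hNz.
    have -> : v * mm * (v * mm) = v * mm * (u * q + v * mm) - u * v * (q%:Z * mm%:Z) by ring.
    by rewrite huv; ring.
  exact: intr_addN.
have ea : a%:R * (u1 * (v * mm))%:~R = e.
  rewrite -[a%:R]/((a%:Z)%:~R : Z) -rmorphM.
  have -> : a%:Z * (u1 * (v * mm)) = v * mm + (- (v1 * v)) * N%:Z.
    rewrite -hNz.
    have -> : a%:Z * (u1 * (v * mm)) = v * mm * (u1 * a + v1 * q) - v1 * v * (q%:Z * mm%:Z) by ring.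
    by rewrite h1; ring.
  exact: intr_addN.
have ec : c%:R * (u2 * (v * mm))%:~R = e.
  rewrite -[c%:R]/((c%:Z)%:~R : Z) -rmorphM.
  have -> : c%:Z * (u2 * (v * mm)) = v * mm + (- (v2 * v)) * N%:Z.
    rewrite -hNz.
    have -> : c%:Z * (u2 * (v * mm)) = v * mm * (u2 * c + v2 * q) - v2 * v * (q%:Z * mm%:Z) by ring.
    by rewrite h2; ring.
  exact: intr_addN.
have eb : b%:R * (u3 * (u * q))%:~R = 1 - e.
  rewrite -[b%:R]/((b%:Z)%:~R : Z) -rmorphM.
  have -> : b%:Z * (u3 * (u * q)) = u * q + (- (v3 * u)) * N%:Z.
    rewrite -hNz.
    have -> : b%:Z * (u3 * (u * q)) = u * q * (u3 * b + v3 * mm) - v3 * u * (q%:Z * mm%:Z) by ring.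
    by rewrite h3; ring.
  transitivity ((u*q)%:~R : Z); first exact: intr_addN.
  have -> : u * q = 1 - v * mm by rewrite -huv; ring.
  by rewrite rmorphB rmorph1.
have -> : Um (1 : Z) = Um e *m Um (1 - e) by rewrite UmD addrC subrK.
apply: ReachM; last by rewrite -eb; apply: ReachU.
rewrite -UmE_idem //.
apply: ReachM; [apply: ReachM |].
- by rewrite -ea -mulrN; apply: ReachL.
- by rewrite -ec -mulrN; apply: ReachW.
- by rewrite -ea; apply: ReachL.
Qed.

Lemma ReachUt t : Reach (Um t).
Proof. rewrite -[t]mul1r; exact: (Reach_pow (@UmD _) (@Um0 _) ReachU1). Qed.

Lemma ReachLt t : Reach (Lm t).
Proof.
have cac : coprimez a c by rewrite coprimezE.
have /coprimezP [[u v] /= h] := cac.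
have -> : t = a%:R * (u%:~R * t) + c%:R * (v%:~R * t).
  have e1 : ((u * a%:Z + v * c%:Z)%:~R : Z) = 1 by rewrite h.
  rewrite rmorphD !rmorphM /= in e1.
  rewrite -[a%:R]/((a%:Z)%:~R : Z) -[c%:R]/((c%:Z)%:~R : Z).
  apply: (bezout_split (R := Z)). exact: e1.
rewrite -LmD; apply: ReachM; first exact: ReachL.
have -> : Lm (c%:R * (v%:~R * t)) = Um (-1) *m Wm (c%:R * (v%:~R * t)) *m Um 1.
  rewrite /Wm !mulmxA UmD addNr Um0 mul1mx -mulmxA UmD addNr Um0 mulmx1 //.
by apply: ReachM; [apply: ReachM; [exact: ReachUt | exact: ReachW] | exact: ReachUt].
Qed.


Lemma ReachBase (p r s : Z) : p * s = 1 -> Reach (mk2 p 0 r s).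
Proof.
move=> h; rewrite (@diag_decomp _ p r s h).
by do 6 (apply: ReachM; last by apply: ReachUt || apply: ReachLt); apply: ReachLt.
Qed.

Lemma valZ (n : nat) : \val (n%:R : Z) = (n %% N)%N.
Proof. exact: val_Zp_nat. Qed.

Lemma ReachE k : forall p q r s : Z, p * s - q * r = 1 ->
  (val p + val q < k)%N -> Reach (mk2 p q r s).
Proof.
elim: k => [//|k IH] p q r s hdet hk.
have ltQ : (val q < N)%N := ltn_ord q.
have ltP : (val p < N)%N := ltn_ord p.
case: (eqVneq (val q) 0%N) => [q0|qn0].
  have q00 : q = 0 by apply: val_inj.
  rewrite q00; apply: ReachBase.
  by rewrite -hdet q00 mul0r subr0.
case: (eqVneq (val p) 0%N) => [p0|pn0].
  have p00 : p = 0 by apply: val_inj.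
  have e : mk2 p q r s = mk2 q 0 (r + s) (- r) *m (Um 1 *m Lm (-1)).
    by rewrite mulmxA mulUm mulLm p00; congr mk2; ring.
  rewrite e; apply: ReachM; last by apply: ReachM; [exact: ReachUt | exact: ReachLt].
  apply: ReachBase; transitivity (p * s - q * r); last exact: hdet.
  by rewrite p00; ring.
case: (leqP (val q) (val p)) => hQP.
  pose kk := (val p %/ val q)%N.
  have ep : p + q * - (kk%:R) = ((val p) %% (val q))%:R by rewrite -natmod !natr_Zp; ring.
  have e : mk2 p q r s = mk2 (p + q * - kk%:R) q (r + s * - kk%:R) s *m Lm kk%:R.
    by rewrite mulLm; congr mk2; ring.
  rewrite e; apply: ReachM; last exact: ReachLt.
  apply: IH; first by transitivity (p * s - q * r); [ring | exact: hdet].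
  have hm : (val p %% val q < val q)%N by rewrite ltn_pmod // lt0n.
  rewrite ep valZ modn_small; last by apply: (ltn_trans hm).
  have hp0 : (0 < val p)%N by rewrite lt0n.
  move: hk hm hQP; clear; lia.
pose kk := (val q %/ val p)%N.
have eq' : p * - (kk%:R) + q = ((val q) %% (val p))%:R by rewrite -natmod !natr_Zp; ring.
have e : mk2 p q r s = mk2 p (p * - kk%:R + q) r (r * - kk%:R + s) *m Um kk%:R.
  by rewrite mulUm; congr mk2; ring.
rewrite e; apply: ReachM; last exact: ReachUt.
apply: IH; first by transitivity (p * s - q * r); [ring | exact: hdet].
have hm : (val q %% val p < val p)%N by rewrite ltn_pmod // lt0n.
rewrite eq' valZ modn_small; last by apply: (ltn_trans hm).
move: hk hm hQP; clear; lia.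
Qed.

Lemma ReachDet (M : 'M[Z]_2) : \det M = 1 -> Reach M.
Proof.
rewrite (mx2E M) det2 => h.
by apply: (ReachE (k := (val (M 0 0) + val (M 0 1)).+1)).
Qed.

End Main.

Lemma origami_iso_refl (gT : finGroupType) (G : {group gT}) (p : gT * gT) :
  origami_iso G p p.
Proof. by exists (idm G); split => //; exact: idm_isom. Qed.

Theorem mainTheorem4 (a b c : nat) (gT : finGroupType) (G : {group gT}) (x y : gT) :
  (0 < a)%N -> (0 < b)%N -> (0 < c)%N ->
  coprime a b -> coprime b c -> coprime a c ->
  G = <<[set x; y]>>%G :> {set gT} ->
  #[x]%g = a -> #[y]%g = b -> #[(x * y)%g]%g = c ->
  totally_noncongruence (in_veech G y x).
Proof.
move=> ha hb hc hab hbc hac _ ox oy oxy n hn B hB.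
case: n hn hB => [//|[|m]] _ hB.
  exists 1%:M; split.
    exists [::]; split => //; exact: origami_iso_refl.
  by move=> i j; rewrite !modz1.
have hd : \det (phi m B) = 1.
  rewrite /phi det_map_mx.
  have := (proj2 (@intr_eqmod m (\det B) 1) hB); by [].
have [w [hw hp]] := ReachDet ha hb hc hab hbc hac ox oy oxy hd.
exists (mat_word w); split.
  exists w; split => //; rewrite hw; exact: origami_iso_refl.
move=> i j; apply/intr_eqmod.
by move/matrixP: hp => /(_ i j); rewrite /phi !mxE.
Qed.
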